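(* For all constants $\beta < \frac{1}{16}$, $L > 16\beta$ and $C_1 > 1$ there exists a constant $C_2 > 1$ such that the following holds. Let $\delta\in(0,1)$, suppose $n > C_2\log\frac{1}{\delta}$, and let $T = \sigma\sqrt{\frac{n}{2\log\frac{2}{\delta}}}$. Let $x_1,\dots,x_n$ be i.i.d. real samples from a distribution with mean $\mu$ and variance at most $\sigma^2$, and let $\mu_0\in\mathbb{R}$ be a given estimate with $|\mu_0 - \mu|\le C_1\sigma\sqrt{\frac{\log\frac{1}{\delta}}{n}}$. Consider the test that computes \[ B = \frac{1}{n}\sum_{i=1}^n (x_i - \mu_0)^2\mathbb{1}_{|x_i - \mu_0| \le 2\beta T} \] and returns ``INLIER-LIGHT'' if $B \le (1-2L)\sigma^2$ and ``OUTLIER-LIGHT'' otherwise. Then with probability at least $1-\delta$: if the distribution is $(4\beta, 4L)$-inlier-light, the test returns ``INLIER-LIGHT''.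
   Context: For a real-valued distribution $x$ with mean $\mu$ and variance at most $\sigma^2$, and with $T = \sigma\sqrt{\frac{n}{2\log\frac{2}{\delta}}}$: $x$ is $(\beta, L)$-inlier-light if $\mathbb{E}[(x-\mu)^2\mathbb{1}_{|x-\mu|\le\beta T}] < (1-L)\sigma^2$. *)

(* Defs.v *)
From HB Require Import structures.
From mathcomp Require Import all_boot all_order all_algebra.
From mathcomp Require Import all_classical all_reals all_analysis.
Set Implicit Arguments. Unset Strict Implicit. Unset Printing Implicit Defensive.
Import Order.TTheory GRing.Theory Num.Theory.
Local Open Scope classical_set_scope.
Local Open Scope ring_scope.

Definition thrT (R : realType) (sigma : R) (n : nat) (delta : R) : R :=
  sigma * Num.sqrt (n%:R / (2 * ln (2 / delta))).

Definition has_mean (R : realType) (D : probability R R) (mu : R) : Prop :=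
  D.-integrable setT (fun x : R => x%:E) /\ (\int[D]_x x%:E = mu%:E)%E.

Definition var_le (R : realType) (D : probability R R) (mu sigma : R) : Prop :=
  (\int[D]_x ((x - mu) ^+ 2)%:E <= (sigma ^+ 2)%:E)%E.

Definition inlier_light (R : realType) (D : probability R R) (mu sigma : R)
    (n : nat) (delta beta L : R) : Prop :=
  (\int[D]_x (if `|x - mu| <= beta * thrT sigma n delta
              then (x - mu) ^+ 2 else 0)%:E
   < ((1 - L) * sigma ^+ 2)%:E)%E.

Definition mutually_independent d (Omega : measurableType d) (R : realType)
    (P : probability Omega R) (n : nat) (X : 'I_n -> {RV P >-> R}) : Prop :=
  forall A : 'I_n -> set R, (forall i, measurable (A i)) ->
    P (\bigcap_(i in [set: 'I_n]) (X i @^-1` A i)) =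
    (\prod_(i < n) P (X i @^-1` A i))%E.

Definition identically_distributed d (Omega : measurableType d) (R : realType)
    (P : probability Omega R) (n : nat) (X : 'I_n -> {RV P >-> R})
    (D : probability R R) : Prop :=
  forall i (A : set R), measurable A -> distribution P (X i) A = D A.

Definition test_B (R : realType) (n : nat) (x : 'I_n -> R)
    (mu0 sigma delta beta : R) : R :=
  n%:R^-1 * \sum_(i < n)
    (if `|x i - mu0| <= 2 * beta * thrT sigma n delta
     then (x i - mu0) ^+ 2 else 0).

(* Main.v *)
Require Import Defs.
From HB Require Import structures.
From mathcomp Require Import all_boot all_order all_algebra.
From mathcomp Require Import all_classical all_reals all_analysis.
Import Order.TTheory GRing.Theory Num.Theory.
Local Open Scope classical_set_scope.
Local Open Scope ring_scope.
From mathcomp Require Import ring lra.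

Lemma int_cindic (R : realType) d (T : measurableType d)
  (mu : {measure set T -> \bar R}) (c : R) (B : set T) :
  0 <= c -> measurable B -> (\int[mu]_x (c * \1_B x)%:E = c%:E * mu B)%E.
Proof.
move=> c0 mB; under eq_integral => w _ do rewrite EFinM.
rewrite ge0_integralZl_EFin //.
all: try by rewrite integral_indic // setIT.
all: try by move=> w _; rewrite lee_fin indicE ler0n.
by apply/measurable_realfun.measurable_EFinP; exact: measurable_realfun.measurable_indic.
Qed.

Lemma core (R : realType) (d : measure_display) (Omega : measurableType d)
  (P : probability Omega R) (D : probability R R) (n : nat)
  (X : 'I_n -> {RV P >-> R}) (y : R -> R) (b h lam S t : R) :
  mutually_independent X -> identically_distributed X D ->
  measurable_fun setT y -> (forall x, 0 <= y x <= b) -> 0 < h -> 0 <= lam ->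
  (\int[D]_x (expR (lam * y x))%:E <= S%:E)%E ->
  (P [set w | (t < \sum_(i < n) y (X i w))%R] <=
     (expR (- (lam * (t - n%:R * h))) * S ^+ n)%:E)%E.
Proof.
move=> indep idd my y0b h0 lam0 intS.
set K := (Num.truncn (b / h)).+1.
pose A (k : nat) := y @^-1` `[k%:R * h, k.+1%:R * h[.
have mA k : measurable (A k).
  by have := my measurableT _ (measurable_itv `[k%:R * h, k.+1%:R * h[); rewrite setTI.
have AE k x : A k x <-> Num.truncn (y x / h) = k.
  rewrite /A /= in_itv /=; split.
    move=> /andP[h1 h2]; apply: truncn_def.
    by rewrite ler_pdivlMr // ltr_pdivrMr // h1 h2.
  move=> <-; have := truncn_itv (divr_ge0 (proj1 (andP (y0b x))) (ltW h0)).
  by rewrite ler_pdivlMr // ltr_pdivrMr //.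
have kK x : (Num.truncn (y x / h) < K)%N.
  rewrite ltnS truncn_le_nat; apply: (le_lt_trans _ (truncnS_gt _)).
  by rewrite ler_pM2r ?invr_gt0 //; case/andP: (y0b x).
pose ok x : 'I_K := Ordinal (kK x).
have kfl x : y x < (Num.truncn (y x / h)).+1%:R * h.
  have := truncn_itv (divr_ge0 (proj1 (andP (y0b x))) (ltW h0)).
  by rewrite ltr_pdivrMr // => /andP[].
pose Rf (f : {ffun 'I_n -> 'I_K}) := \bigcap_(i in [set: 'I_n]) (X i @^-1` A (f i)).
have mR f : measurable (Rf f).
  apply: fin_bigcap_measurable => [|i _]; first exact: finite_finset.
  by have := measurable_funP (X i) measurableT _ (mA (f i)); rewrite setTI.
pose wf w : {ffun 'I_n -> 'I_K} := [ffun i => ok (X i w)].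
have RfE f w : Rf f w <-> f = wf w.
  split.
    move=> Hw; apply/ffunP => i; rewrite ffunE; apply: val_inj => /=.
    by have /AE -> := Hw i I.
  by move=> -> i _ /=; rewrite ffunE; apply/AE.
pose F w := \sum_(i < n) y (X i w).
have mF : measurable_fun setT F.
  apply: measurable_sum => i; exact: measurableT_comp my (measurable_funP (X i)).
pose bad := [set w | (t < F w)%R].
have mbad : measurable bad.
  have := mF measurableT _ (measurable_itv `]t, +oo[); rewrite setTI.
  congr measurable; apply/seteqP; split => w /=; rewrite in_itv /= andbT //.
pose cst (f : {ffun 'I_n -> 'I_K}) :=
  expR (lam * (\sum_(i < n) (f i : nat)%:R * h - (t - n%:R * h))).
have cst0 f : 0 <= cst f by exact: expR_ge0.
have ptw w : (\1_bad w : R) <= \sum_f cst f * \1_(Rf f) w.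
  rewrite (bigD1 (wf w)) //=.
  rewrite (_ : \1_(Rf (wf w)) w = 1); last first.
    by rewrite indicE mem_set //; apply/RfE.
  rewrite mulr1; apply: (@le_trans _ _ (cst (wf w))); last first.
    by rewrite lerDl; apply: sumr_ge0 => f _; rewrite mulr_ge0 // indicE ler0n.
  rewrite indicE; case: (boolP (w \in bad)) => [|_]; last by rewrite cst0.
  rewrite inE /bad /= /F => Hb.
  apply: le_trans (expR_ge1Dx _); rewrite lerDl mulr_ge0 // subr_ge0.
  rewrite lerBlDr; apply: ltW; apply: lt_le_trans Hb _.
  have -> : n%:R * h = \sum_(i < n) h by rewrite sumr_const card_ord mulr_natl.
  rewrite -big_split /=; apply: ler_sum => i _; rewrite ffunE /= -[X in _ <= _ + X]mul1r -mulrDl.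
  by rewrite natr1; apply/ltW/kfl.
pose p (k : nat) := fine (D (A k)).
have pE k : D (A k) = (p k)%:E by rewrite fineK // fin_num_measure.
have p0 k : 0 <= p k by rewrite /p fine_ge0 // measure_ge0.
have PRf f : P (Rf f) = (\prod_(i < n) p (f i))%:E.
  have -> := indep (fun i => A (f i)) (fun i => mA (f i)).
  rewrite -prodEFin; apply: eq_bigr => i _; rewrite -pE.
  exact: (idd i _ (mA _)).
have intf f : (\int[P]_w (cst f * \1_(Rf f) w)%:E = (cst f)%:E * P (Rf f))%E.
  under eq_integral => w _ do rewrite EFinM.
  rewrite ge0_integralZl_EFin //.
  all: try by rewrite integral_indic // setIT.
  all: try by move=> w _; rewrite lee_fin indicE ler0n.
  all: try by apply/measurable_realfun.measurable_EFinP; exact: measurable_realfun.measurable_indic.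
have step1 : (P bad <= (\sum_f cst f * \prod_(i < n) p (f i))%:E)%E.
  rewrite (_ : P bad = \int[P]_w (\1_bad w)%:E)%E; last by rewrite integral_indic // setIT.
  apply: (@le_trans _ _ (\int[P]_w (\sum_f cst f * \1_(Rf f) w)%:E)%E).
    apply: ge0_le_integral => //.
    all: try by move=> w _; rewrite lee_fin; exact: ptw.
    all: try by move=> w _; rewrite lee_fin ?indicE ?ler0n.
    all: try by apply/measurable_realfun.measurable_EFinP; exact: measurable_realfun.measurable_indic.
    apply/measurable_realfun.measurable_EFinP; apply: measurable_sum => f.
    apply: measurable_realfun.measurable_funM; first exact: measurable_cst.
    exact: measurable_realfun.measurable_indic.
  under eq_integral => w _ do rewrite -sumEFin.
  rewrite ge0_integral_sum //.
  all: try by move=> f w _; rewrite lee_fin mulr_ge0 // indicE ler0n.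
  all: try by move=> f; apply/measurable_realfun.measurable_EFinP;
      apply: measurable_realfun.measurable_funM; [exact: measurable_cst|
      exact: measurable_realfun.measurable_indic].
  rewrite -sumEFin le_eqVlt; apply/orP; left; apply/eqP; apply: eq_bigr => f _.
  by rewrite intf PRf.
have kfu x : (Num.truncn (y x / h))%:R * h <= y x.
  have := truncn_itv (divr_ge0 (proj1 (andP (y0b x))) (ltW h0)).
  by rewrite ler_pdivlMr // => /andP[].
pose S' := \sum_(k < K) expR (lam * ((k : nat)%:R * h)) * p k.
have S'0 : 0 <= S' by apply: sumr_ge0 => k _; rewrite mulr_ge0 // expR_ge0.
have algE : \sum_f cst f * \prod_(i < n) p (f i) =
    expR (- (lam * (t - n%:R * h))) * S' ^+ n.
  have cstE f : cst f = expR (- (lam * (t - n%:R * h))) *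
      \prod_(i < n) expR (lam * ((f i : nat)%:R * h)).
    by rewrite /cst mulrBr addrC expRD mulr_sumr expR_sum.
  rewrite (eq_bigr (fun f : {ffun 'I_n -> 'I_K} => expR (- (lam * (t - n%:R * h))) *
     \prod_(i < n) (expR (lam * ((f i : nat)%:R * h)) * p (f i)))); last first.
    by move=> f _; rewrite cstE big_split mulrA.
  rewrite -mulr_sumr; congr (_ * _).
  rewrite -(bigA_distr_bigA (fun (i : 'I_n) (k : 'I_K) =>
     expR (lam * ((k : nat)%:R * h)) * p k)) /=.
  by rewrite prodr_const card_ord.
have S'S : S' <= S.
  rewrite -lee_fin; apply: le_trans intS.
  have -> : (S'%:E = \sum_(k < K) \int[D]_x (expR (lam * ((k : nat)%:R * h)) * \1_(A k) x)%:E)%E.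
    rewrite -sumEFin; apply: eq_bigr => k _.
    rewrite (@int_cindic _ _ _ D _ _ (expR_ge0 _) (mA k)).
    by rewrite EFinM; congr (_ * _)%E; exact/esym/(pE k).
  rewrite -ge0_integral_sum //.
  all: try by move=> k x _; rewrite lee_fin mulr_ge0 ?expR_ge0 // indicE ler0n.
  all: try by move=> k; apply/measurable_realfun.measurable_EFinP;
      apply: measurable_realfun.measurable_funM; [exact: measurable_cst|
      exact: measurable_realfun.measurable_indic].
  apply: ge0_le_integral => //.
  all: try by move=> x _; rewrite sumEFin lee_fin; apply: sumr_ge0 => k _;
     rewrite mulr_ge0 ?expR_ge0 // indicE ler0n.
  all: try by move=> x _; rewrite lee_fin expR_ge0.
  all: try by apply/measurable_realfun.measurable_EFinP;
     apply: measurableT_comp => //; [exact: measurable_realfun.measurable_expR|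
     apply: measurable_realfun.measurable_funM; [exact: measurable_cst| exact: my]].
  all: try by apply: emeasurable_sum => k; apply/measurable_realfun.measurable_EFinP;
      apply: measurable_realfun.measurable_funM; [exact: measurable_cst|
      exact: measurable_realfun.measurable_indic].
  2: move=> x _; rewrite sumEFin lee_fin.
  apply/measurable_realfun.measurable_EFinP.
  apply: (@measurableT_comp _ _ _ _ _ _ expR _ (fun x => lam * y x));
    first exact: measurable_realfun.measurable_expR.
  by apply: measurable_realfun.measurable_funM; [exact: measurable_cst|exact: my].
  rewrite (bigD1 (ok x)) //= big1 ?addr0; last first.
    move=> k hk; rewrite indicE memNset ?mulr0 //.
    move/AE => e; move/eqP: hk; apply; apply: val_inj; by rewrite /= e.
  rewrite indicE mem_set ?mulr1; last exact/AE.
  by rewrite ler_expR ler_wpM2l.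
apply: le_trans step1 _; rewrite lee_fin algE ler_wpM2l ?expR_ge0 //.
by apply: lerXn2r; rewrite ?nnegrE //; exact: le_trans S'0 S'S.
Qed.


Lemma expR_le_lin (R : realType) (u c : R) :
  0 <= u -> u <= c -> c < 1 -> expR u <= 1 + u / (1 - c).
Proof.
move=> u0 uc c1.
have h1 : 1 - u <= expR (- u) by have := expR_ge1Dx (- u); rewrite -[1 - u]/(1 + - u).
have u1 : 0 < 1 - u by lra.
have c0 : 0 < 1 - c by lra.
have -> : expR u = (expR (- u))^-1 by rewrite expRN invrK.
apply: le_trans (_ : (1 - u)^-1 <= _).
  by rewrite lef_pV2 ?posrE ?expR_gt0.
have -> : (1 - u)^-1 = 1 + u / (1 - u) by field; rewrite gt_eqF.
rewrite lerD2l ler_wpM2l // lef_pV2 ?posrE //; lra.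
Qed.

Lemma final_arith (R : realType) (L beta s n l l1 Mb b lam : R) :
  0 < beta -> 16 * beta < L -> L < 1/4 -> 0 < s -> 1 <= n -> 0 < l1 -> l1 <= l ->
  0 <= Mb -> Mb <= (1 - 4 * L + L / 2) * s ->
  b = 2 * beta ^+ 2 * s * n / l ->
  lam = (L / 4) / b ->
  - (lam * (n * ((1 - 2 * L) * s) - n * (L * s / 4))) + n * (lam / (1 - L / 4) * Mb)
    <= - l1.
Proof.
move=> b0 bL L4 s0 n1 l10 l1l Mb0 MbL bE lamE.
have l0 : 0 < l by lra.
have L0 : 0 < L by lra.
have bp : 0 < b by rewrite bE divr_gt0 // !mulr_gt0 ?exprn_gt0 //; lra.
have lam0 : 0 < lam by rewrite lamE divr_gt0 //; lra.
have c1 : 0 < 1 - L / 4 by lra.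
have M1 : Mb / (1 - L / 4) <= (1 - 3 * L) * s.
  rewrite ler_pdivrMr //; nra.
have e1 : lam / (1 - L / 4) * Mb = lam * (Mb / (1 - L / 4)).
  by rewrite mulrAC mulrA.
rewrite e1.
have lamns : lam * (n * s) = L * l / (8 * beta ^+ 2).
  rewrite lamE bE; field.
  by apply/and3P; split; rewrite ?expf_neq0 ?gt_eqF //; lra.
have key : 3 * L ^+ 2 * l / (32 * beta ^+ 2) >= l.
  rewrite ler_pdivlMr; last nra.
  have : 256 * beta ^+ 2 < L ^+ 2 by nra.
  nra.
have : - (lam * (n * ((1 - 2 * L) * s) - n * (L * s / 4))) +
    n * (lam * (Mb / (1 - L / 4))) <= - (lam * (n * s) * (3 * L / 4)).
  have : n * (lam * (Mb / (1 - L / 4))) <= n * (lam * ((1 - 3 * L) * s)).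
    rewrite ler_pM2l; last lra.
    by rewrite ler_pM2l.
  nra.
rewrite lamns.
have : L * l / (8 * beta ^+ 2) * (3 * L / 4) = 3 * L ^+ 2 * l / (32 * beta ^+ 2).
  by field; rewrite gt_eqF.
lra.
Qed.

Lemma my_meas (R : realType) (m a : R) :
  measurable_fun setT (fun x : R => if `|x - m| <= a then (x - m) ^+ 2 else 0).
Proof.
have HX : measurable_fun setT (fun x : R => x ^+ 2).
  by apply: measurable_realfun.measurable_funX; exact: measurable_id.
have mB : measurable_fun setT (fun x : R => x - m).
  by apply: measurable_realfun.measurable_funB; [exact: measurable_id| exact: measurable_cst].
have H1 : measurable_fun setT (fun x : R => `|x - m| <= a).
  apply: measurable_realfun.measurable_fun_ler; last exact: measurable_cst.
  exact: (@measurableT_comp _ _ _ _ _ _ (fun x : R => `|x|) _ (fun x : R => x - m)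
    (@measurable_realfun.normr_measurable R setT) mB).
have H2 : measurable_fun setT (fun x : R => (x - m) ^+ 2).
  exact: (@measurableT_comp _ _ _ _ _ _ (fun x : R => x ^+ 2) _ (fun x : R => x - m)
    HX mB).
exact: (measurable_fun_ifT H1 H2 (measurable_cst _)).
Qed.

Lemma sq_meas (R : realType) (m : R) :
  measurable_fun setT (fun x : R => (x - m) ^+ 2).
Proof.
have HX : measurable_fun setT (fun x : R => x ^+ 2).
  by apply: measurable_realfun.measurable_funX; exact: measurable_id.
have mB : measurable_fun setT (fun x : R => x - m).
  by apply: measurable_realfun.measurable_funB; [exact: measurable_id| exact: measurable_cst].
exact: (@measurableT_comp _ _ _ _ _ _ (fun x : R => x ^+ 2) _ (fun x : R => x - m)
    HX mB).
Qed.

Theorem lemma14 (R : realType) (beta L C1 : R) :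
  beta < 1 / 16 -> 16 * beta < L -> 1 < C1 ->
  exists C2 : R, 1 < C2 /\
  forall (d : measure_display) (Omega : measurableType d)
    (P : probability Omega R) (D : probability R R)
    (n : nat) (X : 'I_n -> {RV P >-> R}) (delta sigma mu mu0 : R),
    0 < delta < 1 ->
    C2 * ln (1 / delta) < n%:R ->
    0 < sigma ->
    has_mean D mu ->
    var_le D mu sigma ->
    mutually_independent X ->
    identically_distributed X D ->
    `|mu0 - mu| <= C1 * sigma * Num.sqrt (ln (1 / delta) / n%:R) ->
    inlier_light D mu sigma n delta (4 * beta) (4 * L) ->
    (P [set w | test_B (fun i => X i w) mu0 sigma delta beta
                <= (1 - 2 * L) * sigma ^+ 2]%R >= (1 - delta)%:E)%E.
Proof.
move=> hb hL hC1.
have L4 (D : probability R R) (mu sigma : R) (n : nat) (delta : R) :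
    0 < sigma -> inlier_light D mu sigma n delta (4 * beta) (4 * L) -> L < 1/4.
  move=> s0 hil.
  have H0 : (0 <= \int[D]_x (if `|x - mu| <= 4 * beta * thrT sigma n delta then (x - mu) ^+ 2 else 0)%:E)%E.
    by apply: integral_ge0 => x _; rewrite lee_fin; case: ifP => // _; exact: sqr_ge0.
  have := le_lt_trans H0 hil; rewrite lte_fin => H.
  have s2 : 0 < sigma ^+ 2 by exact: exprn_gt0.
  by move: H; rewrite pmulr_lgt0 //; lra.
have T0 (sigma : R) (n : nat) (delta : R) : 0 < sigma -> 0 <= thrT sigma n delta.
  by move=> s0; rewrite /thrT mulr_ge0 ?sqrtr_ge0 // ltW.
have [b0|bpos] := lerP beta 0.
  exists 2; split; first lra.
  move=> d Omega P D n X delta sigma mu mu0 /andP[d0 d1] hn s0 hm hv hind hid hmu0 hil.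
  have L4' := L4 _ _ _ _ _ s0 hil.
  rewrite (_ : [set w | _] = setT); first by rewrite probability_setT lee_fin; lra.
  apply/seteqP; split => w // _ /=.
  rewrite /test_B big1 ?mulr0; first by rewrite mulr_ge0 ?sqr_ge0 //; lra.
  move=> i _; case: ifP => // hle.
  have : `|X i w - mu0| <= 0.
    apply: le_trans hle _; have := T0 sigma n delta s0; nra.
  by rewrite normr_le0 => /eqP ->; rewrite expr0n.
set C2 := 1 + C1 ^+ 2 / beta ^+ 2 + 4 * C1 ^+ 2 * (1 + 4 / L) / L.
have L0 : 0 < L by lra.
have b2 : 0 < beta ^+ 2 by exact: exprn_gt0.
have K40 : 0 < 1 + 4 / L by rewrite addr_gt0 // divr_gt0.
have t1 : 0 < C1 ^+ 2 / beta ^+ 2 by rewrite divr_gt0 // exprn_gt0 //; lra.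
have t2 : 0 <= 4 * C1 ^+ 2 * (1 + 4 / L) / L.
  apply: divr_ge0; last exact: ltW.
  apply: mulr_ge0; last exact: ltW.
  by apply: mulr_ge0 => //; exact: sqr_ge0.
exists C2; split; first by rewrite /C2; lra.
move=> d Omega P D n X delta sigma mu mu0 /andP[d0 d1] hn s0 hm hv hind hid hmu0 hil.
have L4' := L4 _ _ _ _ _ s0 hil.
have C2a : C1 ^+ 2 <= beta ^+ 2 * C2.
  rewrite [X in _ <= X]mulrC -ler_pdivrMr //; rewrite /C2; lra.
have C2b : 4 * C1 ^+ 2 * (1 + 4 / L) <= L * C2.
  rewrite [X in _ <= X]mulrC -ler_pdivrMr //; rewrite /C2; lra.
have C21 : 1 < C2 by rewrite /C2; lra.
set s := sigma ^+ 2.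
have s0' : 0 < s by exact: exprn_gt0.
set l1 := ln (1 / delta).
have l10 : 0 < l1 by apply: ln_gt0; rewrite ltr_pdivlMr // mul1r.
set l := ln (2 / delta).
have lE : l = ln 2 + l1.
  rewrite /l /l1 -lnM ?posrE ?divr_gt0 //; congr ln; by rewrite mulrA mulr1.
have ln2 : 0 < ln (2 : R) <= 1.
  apply/andP; split; first by apply: ln_gt0; lra.
  have e1 : (2:R) <= expR 1 by have := expR_ge1Dx (1 : R); lra.
  by rewrite -[X in _ <= X](expRK 1) ler_ln ?posrE ?expR_gt0 //; lra.
have l0 : 0 < l by lra.
have nR0 : 0 < n%:R :> R.
  by apply: lt_trans hn; rewrite mulr_gt0 //; lra.
have n1 : 1 <= n%:R :> R.
  by rewrite ler1n -(ltr0n R).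
set T := thrT sigma n delta.
have T0' : 0 <= T by exact: T0.
have T2 : T ^+ 2 = s * (n%:R / (2 * l)).
  by rewrite /T /thrT exprMn sqr_sqrtr // divr_ge0 // ?ler0n // mulr_ge0 // ltW.
set a := 2 * beta * T.
have a0 : 0 <= a by rewrite /a mulr_ge0 // mulr_ge0 // ltW.
have a2 : a ^+ 2 = 2 * beta ^+ 2 * s * n%:R / l.
  rewrite /a exprMn T2 exprMn; rewrite /s; field; apply/eqP; lra.
set dd := `|mu0 - mu|.
set Xr := l1 / n%:R.
have Xr0 : 0 < Xr by rewrite divr_gt0.
have C2X : C2 * Xr < 1 by rewrite /Xr mulrA ltr_pdivrMr // mul1r.
have dd2 : dd ^+ 2 <= C1 ^+ 2 * s * Xr.
  have hp : 0 <= C1 * sigma * Num.sqrt Xr.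
    by rewrite !mulr_ge0 ?sqrtr_ge0 // ltW //; lra.
  have := @lerXn2r _ 2 dd (C1 * sigma * Num.sqrt Xr).
  rewrite !nnegrE => /(_ (normr_ge0 _) hp hmu0).
  by rewrite !exprMn sqr_sqrtr // ltW.
have hsX : 0 < s * Xr by rewrite mulr_gt0.
have hbs : 0 < beta ^+ 2 * s by rewrite mulr_gt0.
have dd2b : dd ^+ 2 <= beta ^+ 2 * s by nra.
have l2n : l <= 2 * n%:R.
  have : l1 < n%:R by apply: le_lt_trans hn; rewrite ler_peMl //; lra.
  lra.
have ddl : dd ^+ 2 <= a ^+ 2.
  rewrite a2; apply: le_trans dd2b _; rewrite ler_pdivlMr //; nra.
have dd0 : 0 <= dd by exact: normr_ge0.
have dda : dd <= a by nra.
have kap : (1 + 4 / L) * dd ^+ 2 <= L / 4 * s.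
  have hLs : 0 < L * s by rewrite mulr_gt0.
  nra.
pose y := fun x : R => if `|x - mu0| <= a then (x - mu0) ^+ 2 else 0.
set b := 2 * beta ^+ 2 * s * n%:R / l.
have bp : 0 < b by rewrite /b divr_gt0 // !mulr_gt0.
have y0b x : 0 <= y x <= b.
  rewrite /y; case: ifP => H; last by rewrite lexx ltW.
  rewrite sqr_ge0 /= /b -a2.
  move: H; rewrite ler_norml => /andP[H1 H2]; nra.
pose g1 := fun x : R => if `|x - mu| <= 4 * beta * T then (x - mu) ^+ 2 else 0.
set kp := (1 + 4 / L) * dd ^+ 2.
set Mb := (1 - 4 * L) * s + L / 4 * s + kp.
have kp0 : 0 <= kp by rewrite /kp mulr_ge0 ?sqr_ge0 // ltW.
have Mb0 : 0 <= Mb by rewrite /Mb; nra.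
have MbL : Mb <= (1 - 4 * L + L / 2) * s by rewrite /Mb /kp; lra.
have ptw x : y x <= g1 x + (L / 4 * (x - mu) ^+ 2 + kp).
  rewrite /y; case: ifP => H; last first.
    have g10 : 0 <= g1 x by rewrite /g1; case: ifP => // _; exact: sqr_ge0.
    apply: addr_ge0 => //; apply: addr_ge0 => //; apply: mulr_ge0; [lra | exact: sqr_ge0].
  have H2 : `|x - mu| <= 4 * beta * T.
    have -> : x - mu = (x - mu0) + (mu0 - mu) by ring.
    apply: le_trans (ler_normD _ _) _.
    have : 4 * beta * T = a + a by rewrite /a; ring.
    move=> ->; apply: lerD => //.
  rewrite /g1 H2.
  have hv2 : dd ^+ 2 = (mu0 - mu) ^+ 2 by rewrite /dd real_normK // num_real.
  have -> : x - mu0 = (x - mu) - (mu0 - mu) by ring.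
  rewrite /kp hv2.
  set u := x - mu; set v := mu0 - mu.
  have e : L / 4 * u ^+ 2 + 4 / L * v ^+ 2 + 2 * u * v = L / 4 * (u + 4 / L * v) ^+ 2.
    by field; apply/eqP; lra.
  have : 0 <= L / 4 * (u + 4 / L * v) ^+ 2 by rewrite mulr_ge0 ?sqr_ge0 //; lra.
  rewrite -e; nra.
have my : measurable_fun setT y by exact: my_meas.
have mg1 : measurable_fun setT g1 by exact: my_meas.
have msq : measurable_fun setT (fun x : R => (x - mu) ^+ 2) by exact: sq_meas.
have g10 x : 0 <= g1 x by rewrite /g1; case: ifP => // _; exact: sqr_ge0.
have int_y : (\int[D]_x (y x)%:E <= Mb%:E)%E.
  apply: (@le_trans _ _ (\int[D]_x ((g1 x)%:E + ((L / 4)%:E * ((x - mu) ^+ 2)%:E + kp%:E)))%E).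
    apply: ge0_le_integral => //.
    all: try by move=> x _; rewrite lee_fin; case/andP: (y0b x).
    all: try by move=> x _; rewrite -EFinM -!EFinD lee_fin; exact: ptw.
    all: try by apply/measurable_realfun.measurable_EFinP.
    have -> : (fun x : R => ((g1 x)%:E + ((L / 4)%:E * ((x - mu) ^+ 2)%:E + kp%:E))%E) =
        EFin \o (fun x => g1 x + (L / 4 * (x - mu) ^+ 2 + kp)).
      by apply/funext => x /=; rewrite -EFinM -!EFinD.
    apply/measurable_realfun.measurable_EFinP.
    apply: measurable_realfun.measurable_funD => //.
    apply: measurable_realfun.measurable_funD; last exact: measurable_cst.
    by apply: measurable_realfun.measurable_funM => //; exact: measurable_cst.
  have L40 : 0 <= L / 4 by lra.
  rewrite ge0_integralD //.
  all: try by move=> x _; rewrite lee_fin.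
  all: try by apply/measurable_realfun.measurable_EFinP.
  all: try by move=> x _; rewrite -EFinM -EFinD lee_fin addr_ge0 // mulr_ge0 // sqr_ge0.
  2: {
    have -> : (fun x : R => ((L / 4)%:E * ((x - mu) ^+ 2)%:E + kp%:E)%E) =
        EFin \o (fun x => (L / 4 * (x - mu) ^+ 2 + kp)).
      by apply/funext => x /=; rewrite -EFinM -!EFinD.
    apply/measurable_realfun.measurable_EFinP.
    apply: measurable_realfun.measurable_funD; last exact: measurable_cst.
    by apply: measurable_realfun.measurable_funM => //; exact: measurable_cst. }
  rewrite ge0_integralD //.
  all: try by move=> x _; rewrite lee_fin.
  all: try by move=> x _; rewrite -EFinM lee_fin mulr_ge0 // sqr_ge0.
  all: try exact: measurable_cst.
  all: try by apply: emeasurable_funM => //; exact: measurable_cst.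
  2: {
    have -> : (fun x : R => ((L / 4)%:E * ((x - mu) ^+ 2)%:E)%E) =
        EFin \o (fun x => (L / 4 * (x - mu) ^+ 2)).
      by apply/funext => x /=; rewrite -EFinM.
    apply/measurable_realfun.measurable_EFinP.
    by apply: measurable_realfun.measurable_funM => //; exact: measurable_cst. }
  rewrite ge0_integralZl_EFin //.
  all: try by move=> x _; rewrite lee_fin sqr_ge0.
  all: try by apply/measurable_realfun.measurable_EFinP.
  rewrite integral_cst // [X in (kp%:E * X)%E](_ : _ = 1%E) ?mule1; last exact: probability_setT.
  have hv' : (\int[D]_x ((x - mu) ^+ 2)%:E <= s%:E)%E by exact: hv.
  have hil' : (\int[D]_x (g1 x)%:E <= ((1 - 4 * L) * s)%:E)%E by exact: ltW hil.
  apply: le_trans (leeD hil' (leeD (lee_wpmul2l _ hv') (lexx _))) _.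
    by rewrite lee_fin.
  by rewrite -EFinM -!EFinD lee_fin /Mb addrA.
set lam := (L / 4) / b.
have lam0 : 0 < lam by rewrite /lam divr_gt0 //; lra.
have lamb : lam * b = L / 4 by rewrite /lam divfK // gt_eqF.
set k := lam / (1 - L / 4).
have k0 : 0 <= k by rewrite /k divr_ge0 ?ltW //; lra.
set S := 1 + k * Mb.
have intS : (\int[D]_x (expR (lam * y x))%:E <= S%:E)%E.
  apply: (@le_trans _ _ (\int[D]_x (1%:E + k%:E * (y x)%:E))%E).
  { apply: ge0_le_integral => //.
    all: try by move=> x _; rewrite lee_fin expR_ge0.
    - apply/measurable_realfun.measurable_EFinP.
      apply: (@measurableT_comp _ _ _ _ _ _ expR _ (fun x => lam * y x));
        first exact: measurable_realfun.measurable_expR.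
      by apply: measurable_realfun.measurable_funM; [exact: measurable_cst|exact: my].
    - have -> : (fun x : R => (1%:E + k%:E * (y x)%:E)%E) = EFin \o (fun x => 1 + k * y x).
        by apply/funext => x /=; rewrite -EFinM -EFinD.
      apply/measurable_realfun.measurable_EFinP.
      apply: measurable_realfun.measurable_funD; first exact: measurable_cst.
      by apply: measurable_realfun.measurable_funM; [exact: measurable_cst|exact: my].
    - move=> x _; rewrite -EFinM -EFinD lee_fin.
      have [y0 yb] := andP (y0b x).
      have h2 : lam * y x <= L / 4.
        by rewrite -lamb; apply: ler_wpM2l; [exact: ltW|exact: yb].
      have h3 : L / 4 < 1 by lra.
      have := @expR_le_lin R (lam * y x) (L / 4) (mulr_ge0 (ltW lam0) y0) h2 h3.
      by rewrite (_ : k * y x = lam * y x / (1 - L / 4)) // /k mulrAC. }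
  rewrite ge0_integralD //.
  all: try by move=> x _; rewrite lee_fin.
  all: try exact: measurable_cst.
  all: try by move=> x _; rewrite -EFinM lee_fin mulr_ge0 //; case/andP: (y0b x).
  2: { have -> : (fun x : R => (k%:E * (y x)%:E)%E) = EFin \o (fun x => k * y x).
        by apply/funext => x /=; rewrite -EFinM.
      apply/measurable_realfun.measurable_EFinP.
      by apply: measurable_realfun.measurable_funM; [exact: measurable_cst|exact: my]. }
  rewrite integral_cst // [X in (1%:E * X)%E](_ : _ = 1%E) ?mule1; last exact: probability_setT.
  rewrite ge0_integralZl_EFin //.
  all: try by move=> x _; rewrite lee_fin; case/andP: (y0b x).
  all: try by apply/measurable_realfun.measurable_EFinP.
  apply: le_trans (leeD (lexx _) (lee_wpmul2l _ int_y)) _.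
    by rewrite lee_fin.
  by rewrite -EFinM -EFinD.
set h := L * s / 4.
have h0 : 0 < h by rewrite /h divr_gt0 // mulr_gt0.
set t := n%:R * ((1 - 2 * L) * s).
have Pbad := core R d Omega P D n X y b h lam S t hind hid my y0b h0 (ltW lam0) intS.
have Sle : S <= expR (k * Mb) by exact: expR_ge1Dx.
have S0 : 0 <= S by rewrite /S addr_ge0 // mulr_ge0.
have Sn : S ^+ n <= expR (n%:R * (k * Mb)).
  by rewrite expRM_natl; apply: lerXn2r; rewrite ?nnegrE ?expR_ge0.
have l1l : l1 <= l by lra.
have fa := final_arith R L beta s n%:R l l1 Mb b lam bpos hL L4' s0' n1 l10 l1l Mb0 MbL
  erefl erefl.
have dE : expR (- l1) = delta.
  by rewrite /l1 div1r lnV ?posrE // opprK lnK // posrE.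
pose bad := [set w | (t < \sum_(i < n) y (X i w))%R].
have mbad : measurable bad.
  have mF : measurable_fun setT (fun w => \sum_(i < n) y (X i w)).
    apply: measurable_sum => i; exact: measurableT_comp my (measurable_funP (X i)).
  have := mF measurableT _ (measurable_itv `]t, +oo[); rewrite setTI.
  congr measurable; apply/seteqP; split => w /=; rewrite in_itv /= andbT //.
have Pb : (P bad <= delta%:E)%E.
  apply: le_trans Pbad _; rewrite lee_fin.
  apply: (@le_trans _ _ (expR (- (lam * (t - n%:R * h))) * expR (n%:R * (k * Mb)))).
    by rewrite ler_wpM2l ?expR_ge0.
  by rewrite -expRD -dE ler_expR.
rewrite (_ : [set w | _] = ~` bad).
  rewrite probability_setC //.
  have fin : P bad = (fine (P bad))%:E by rewrite fineK // fin_num_measure.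
  rewrite fin in Pb *; rewrite -EFinB lee_fin; rewrite lee_fin in Pb; lra.
apply/seteqP; split => w /=.
- rewrite /test_B ler_pdivrMl // => H H'.
  by have := lt_le_trans H' H; rewrite /t ltxx.
- move=> H; rewrite /test_B ler_pdivrMl // leNgt; apply/negP => H'.
  by apply: H; exact: H'.
Qed.
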